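(* Let $\Phi:\mathbb{R}_{++}^{n\times m}\to\mathbb{R}$ be a convex function which is positively 1-homogeneous ($\Phi(tA)=t\Phi(A)$ for all $t>0$). Then for every $p\in\mathcal{P}_{n-1}$, $q\in\mathcal{P}_{m-1}$, \[ \inf_{P\in\Pi(p,q)}\Phi(P)=\sup\Big\{\langle p,\alpha\rangle+\langle q,\beta\rangle\ :\ \alpha\in\mathbb{R}^n,\ \beta\in\mathbb{R}^m,\ \Phi^*(\alpha\oplus\beta)=0\Big\}. \]
   Context: $\mathbb{R}_{++}^{n\times m}$ denotes the set of real $n\times m$ matrices with all entries strictly positive. $\mathcal{P}_{n-1}=\{p\in\mathbb{R}^n:\sum_i p_i=1,\ p_i>0\}$, similarly $\mathcal{P}_{m-1}$. $\Pi(p,q)=\{P\in\mathbb{R}_{++}^{n\times m}:\sum_j P_{ij}=p_i\ \forall i,\ \sum_i P_{ij}=q_j\ \forall j\}$. The Legendre transform is $\Phi^*(u)=\sup_{A\in\mathbb{R}_{++}^{n\times m}}\{\langle A,u\rangle-\Phi(A)\}\in\mathbb{R}\cup\{+\infty\}$ with $\langle A,u\rangle=\sum_{i,j}A_{ij}u^{ij}$, and $(\alpha\oplus\beta)^{ij}=\alpha^i+\beta^j$. *)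

(* Defs.v *)
From HB Require Import structures.
From mathcomp Require Import all_boot all_order all_algebra.
From mathcomp Require Import all_classical all_reals ereal.
Set Implicit Arguments. Unset Strict Implicit. Unset Printing Implicit Defensive.
Import Order.TTheory GRing.Theory Num.Theory.
Local Open Scope ring_scope.
Local Open Scope classical_set_scope.

Definition posmx (R : realType) (n m : nat) (A : 'M[R]_(n, m)) : Prop :=
  forall i j, 0 < A i j.

Definition simplex_pos (R : realType) (n : nat) (p : 'I_n -> R) : Prop :=
  (forall i, 0 < p i) /\ \sum_(i < n) p i = 1.

Definition couplings (R : realType) (n m : nat) (p : 'I_n -> R) (q : 'I_m -> R)
  : set 'M[R]_(n, m) :=
  [set P | posmx P /\ (forall i, \sum_(j < m) P i j = p i)
                   /\ (forall j, \sum_(i < n) P i j = q j)].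

Definition frob (R : realType) (n m : nat) (A u : 'M[R]_(n, m)) : R :=
  \sum_(i < n) \sum_(j < m) A i j * u i j.

Definition oplus_mx (R : realType) (n m : nat) (a : 'I_n -> R) (b : 'I_m -> R)
  : 'M[R]_(n, m) := \matrix_(i < n, j < m) (a i + b j).

Definition legendre (R : realType) (n m : nat) (Phi : 'M[R]_(n, m) -> R)
  (u : 'M[R]_(n, m)) : \bar R :=
  ereal_sup [set ((frob A u - Phi A)%:E) | A in posmx (R:=R) (n:=n) (m:=m)].

Definition convex_on_pos (R : realType) (n m : nat) (Phi : 'M[R]_(n, m) -> R) : Prop :=
  forall A B t, posmx A -> posmx B -> 0 <= t -> t <= 1 ->
    Phi (t *: A + (1 - t) *: B) <= t * Phi A + (1 - t) * Phi B.

Definition pos_homogeneous (R : realType) (n m : nat) (Phi : 'M[R]_(n, m) -> R) : Prop :=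
  forall A t, posmx A -> 0 < t -> Phi (t *: A) = t * Phi A.

(* Main.v *)
Require Import Defs.
From HB Require Import structures.
From mathcomp Require Import all_boot all_order all_algebra.
From mathcomp Require Import all_classical all_reals ereal.
From mathcomp Require Import ring lra.
Set Implicit Arguments. Unset Strict Implicit. Unset Printing Implicit Defensive.
Import Order.TTheory GRing.Theory Num.Theory.
Local Open Scope ring_scope.
Local Open Scope classical_set_scope.
Definition LinAlong (R : realType) (V : lmodType R) (D : V -> Prop) (s : V -> R)
  (f : V) (c : R) := forall x t, D x -> D (x + t *: f) /\ s (x + t *: f) = s x + t * c.

Record Inv (R : realType) (V : lmodType R) (b : V) (D : V -> Prop) (s : V -> R) : Prop := {
  I_b : D b;
  I_add : forall x y, D x -> D y -> D (x + y);
  I_scale : forall x l, 0 < l -> D x -> D (l *: x);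
  I_sub : forall x y, D x -> D y -> s (x + y) <= s x + s y;
  I_hom : forall x l, 0 < l -> D x -> s (l *: x) = l * s x;
  I_int : forall x, exists l, 0 < l /\ D (l *: b + x) }.

Definition valid (R : realType) (V : lmodType R) (b : V) (D : V -> Prop) (s : V -> R)
  (e : V) (c : R) := exists M, forall u, D (b + u *: e) -> M <= s (b + u *: e) - u * c.

Definition Dst (R : realType) (V : lmodType R) (D : V -> Prop) (e : V) (x : V) :=
  exists t, D (x + t *: e).
Definition Eset (R : realType) (V : lmodType R) (D : V -> Prop) (s : V -> R) (e : V) (c : R)
  (x : V) : set R := [set y | exists t, D (x + t *: e) /\ y = s (x + t *: e) - t * c].
Definition Sst (R : realType) (V : lmodType R) (D : V -> Prop) (s : V -> R) (e : V) (c : R)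
  (x : V) := inf (Eset D s e c x).

Lemma Eset_lb (R : realType) (V : lmodType R) (b : V) D s e c x :
  Inv b D s -> valid b D s e c -> Dst D e x -> has_lbound (Eset D s e c x).
Proof.
move=> I [M HM] _.
have [l [l0 Dl]] := I_int I (- x).
exists (l * M - s (l *: b - x)) => y [t [Dt ->]].
have D1 : D (l *: b + t *: e).
  by have := I_add I Dt Dl; rewrite addrC addrA subrK addrC.
have D2 : D (b + (t / l) *: e).
  have il : 0 < l^-1 by rewrite invr_gt0.
  have := I_scale I il D1.
  by rewrite scalerDr scalerA mulVf ?gt_eqF // scale1r scalerA mulrC.
have E1 : l *: (b + (t / l) *: e) = l *: b + t *: e.
  by rewrite scalerDr scalerA mulrC divfK ?gt_eqF.
have := I_sub I Dt Dl.
have -> : x + t *: e + (l *: b - x) = l *: b + t *: e.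
  by rewrite addrC addrA subrK addrC.
rewrite -E1 (I_hom I l0 D2) => H1.
have := HM _ D2 => H2.
have H3 : l * M <= l * (s (b + (t / l) *: e) - t / l * c) by rewrite ler_pM2l.
have E2 : l * (s (b + (t / l) *: e) - t / l * c) = l * s (b + (t / l) *: e) - t * c.
  by rewrite mulrBr mulrA mulrCA divff ?gt_eqF // mulr1.
rewrite E2 in H3.
lra.
Qed.

Lemma Dst_of (R : realType) (V : lmodType R) (D : V -> Prop) e x : D x -> Dst D e x.
Proof. by move=> Dx; exists 0; rewrite scale0r addr0. Qed.

Lemma Sst_le (R : realType) (V : lmodType R) (b : V) D s e c x :
  Inv b D s -> valid b D s e c -> D x -> Sst D s e c x <= s x.
Proof.
move=> I v Dx; have := ge_inf (Eset_lb I v (Dst_of e Dx)); apply.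
by exists 0; rewrite scale0r addr0 mul0r subr0.
Qed.

Lemma Eset_ne (R : realType) (V : lmodType R) (D : V -> Prop) s e c x :
  Dst D e x -> nonempty (Eset D s e c x).
Proof. by move=> [t Dt]; exists (s (x + t *: e) - t * c); exists t. Qed.

Lemma Sst_Inv (R : realType) (V : lmodType R) (b : V) D s e c :
  Inv b D s -> valid b D s e c -> Inv b (Dst D e) (Sst D s e c).
Proof.
move=> I v; split.
- exact: Dst_of (I_b I).
- move=> x y [t Dt] [u Du]; exists (t + u).
  by rewrite scalerDl addrACA; exact: (I_add I Dt Du).
- move=> x l l0 [t Dt]; exists (l * t).
  by rewrite -scalerA -scalerDr; exact: (I_scale I l0 Dt).
- move=> x y Dx Dy.
  have Dxy : Dst D e (x + y).
    by case: Dx => t Dt; case: Dy => u Du; exists (t + u); rewrite scalerDl addrACA; exact: (I_add I Dt Du).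
  have lb := ge_inf (Eset_lb I v Dxy).
  set S := Sst D s e c (x + y).
  suff : S - Sst D s e c x <= Sst D s e c y by lra.
  apply: lb_le_inf; first exact: Eset_ne.
  move=> _ [u [Du ->]].
  suff : S - (s (y + u *: e) - u * c) <= Sst D s e c x by lra.
  apply: lb_le_inf; first exact: Eset_ne.
  move=> _ [t [Dt ->]].
  have H1 : S <= s (x + y + (t + u) *: e) - (t + u) * c.
    by apply: lb; exists (t + u); split => //; rewrite scalerDl addrACA; exact: (I_add I Dt Du).
  have H2 := I_sub I Dt Du.
  rewrite addrACA -scalerDl in H2.
  lra.
- move=> x l l0 Dx.
  have Dlx : Dst D e (l *: x).
    by case: Dx => t Dt; exists (l * t); rewrite -scalerA -scalerDr; exact: (I_scale I l0 Dt).
  apply/eqP; rewrite eq_le; apply/andP; split.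
  + rewrite -ler_pdivrMl //.
    apply: lb_le_inf; first exact: Eset_ne.
    move=> _ [t [Dt ->]].
    rewrite ler_pdivrMl //.
    have := ge_inf (Eset_lb I v Dlx); apply.
    exists (l * t); split; first by rewrite -scalerA -scalerDr; exact: (I_scale I l0 Dt).
    by rewrite -scalerA -scalerDr (I_hom I l0 Dt) mulrBr mulrA.
  + apply: lb_le_inf; first exact: Eset_ne.
    move=> _ [t [Dt ->]].
    have E1 : l *: (x + (t / l) *: e) = l *: x + t *: e.
      by rewrite scalerDr scalerA mulrC divfK ?gt_eqF.
    have il : 0 < l^-1 by rewrite invr_gt0.
    have Dt' : D (x + (t / l) *: e).
      have := I_scale I il Dt.
      by rewrite scalerDr !scalerA mulVf ?gt_eqF // scale1r mulrC.
    rewrite -E1 (I_hom I l0 Dt').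
    have := ge_inf (Eset_lb I v Dx) (_ : Eset D s e c x (s (x + (t / l) *: e) - t / l * c)).
    move=> /(_ (ex_intro _ (t / l) (conj Dt' erefl))) H.
    have -> : l * s (x + t / l *: e) - t * c = l * (s (x + (t / l) *: e) - t / l * c).
      by rewrite mulrBr [l * (_ * c)]mulrA mulrCA divff ?gt_eqF // mulr1.
    by rewrite ler_pM2l.
- move=> x; have [l [l0 Dl]] := I_int I x; exists l; split => //; exact: Dst_of.
Qed.

Lemma Sst_lin (R : realType) (V : lmodType R) (b : V) D s e c :
  Inv b D s -> valid b D s e c -> LinAlong (Dst D e) (Sst D s e c) e c.
Proof.
move=> I v x tau Dx.
have Dxt : Dst D e (x + tau *: e).
  by case: Dx => t Dt; exists (t - tau); rewrite -addrA -scalerDl addrCA subrr addr0.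
split => //.
apply/eqP; rewrite eq_le; apply/andP; split.
- suff : Sst D s e c (x + tau *: e) - tau * c <= Sst D s e c x by lra.
  apply: lb_le_inf; first exact: Eset_ne.
  move=> _ [t [Dt ->]].
  suff : Sst D s e c (x + tau *: e) <= s (x + t *: e) - (t - tau) * c by lra.
  apply: (ge_inf (Eset_lb I v Dxt)); exists (t - tau).
  by rewrite -addrA -scalerDl addrCA subrr addr0.
- suff : Sst D s e c x + tau * c <= Sst D s e c (x + tau *: e) by lra.
  apply: lb_le_inf; first exact: Eset_ne.
  move=> _ [t [Dt ->]].
  rewrite -addrA -scalerDl in Dt *.
  suff : Sst D s e c x <= s (x + (tau + t) *: e) - (tau + t) * c by lra.
  by apply: (ge_inf (Eset_lb I v Dx)); exists (tau + t).
Qed.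

Lemma Sst_pres (R : realType) (V : lmodType R) (b : V) D s e c f cf :
  Inv b D s -> valid b D s e c -> LinAlong D s f cf ->
  LinAlong (Dst D e) (Sst D s e c) f cf.
Proof.
move=> I v L x tau Dx.
have Dxt : Dst D e (x + tau *: f).
  by case: Dx => t Dt; exists t; rewrite addrAC; case: (L _ tau Dt).
split => //.
apply/eqP; rewrite eq_le; apply/andP; split.
- suff : Sst D s e c (x + tau *: f) - tau * cf <= Sst D s e c x by lra.
  apply: lb_le_inf; first exact: Eset_ne.
  move=> _ [t [Dt ->]].
  have [L1 L2] := L _ tau Dt.
  suff : Sst D s e c (x + tau *: f) <= s (x + t *: e + tau *: f) - t * c by lra.
  apply: (ge_inf (Eset_lb I v Dxt)); exists t.
  by rewrite addrAC.
- suff : Sst D s e c x + tau * cf <= Sst D s e c (x + tau *: f) by lra.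
  apply: lb_le_inf; first exact: Eset_ne.
  move=> _ [t [Dt ->]].
  rewrite addrAC in Dt *.
  have [L1 L2] := L _ (- tau) Dt.
  have E : x + t *: e + tau *: f + (- tau) *: f = x + t *: e.
    by rewrite -addrA -scalerDl addrN scale0r addr0.
  rewrite E in L1 L2.
  have [L3 L4] := L _ tau L1.
  rewrite L4.
  suff : Sst D s e c x <= s (x + t *: e) - t * c by lra.
  by apply: (ge_inf (Eset_lb I v Dx)); exists t.
Qed.

Lemma Sst_Q (R : realType) (V : lmodType R) (D : V -> Prop) e (Q : V -> Prop) :
  (forall x t, Q (x + t *: e) -> Q x) -> (forall x, D x -> Q x) ->
  forall x, Dst D e x -> Q x.
Proof. by move=> HQ HD x [t Dt]; apply: (HQ _ t); apply: HD. Qed.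

Lemma Sst_fib (R : realType) (V : lmodType R) D s (e : V) (P : V -> Prop) r :
  (forall x t, P x -> P (x + t *: e)) -> (forall x, D x -> P x -> r <= s x) ->
  forall x, Dst D e x -> P x -> r <= Sst D s e 0 x.
Proof.
move=> HP HD x Dx Px; apply: lb_le_inf; first exact: Eset_ne.
by move=> _ [t [Dt ->]]; rewrite mulr0 subr0; apply: HD => //; apply: HP.
Qed.

Lemma key1d (R : realType) (V : lmodType R) (b : V) D s e u w :
  Inv b D s -> u < 0 -> 0 < w -> D (b + u *: e) -> D (b + w *: e) ->
  (s (b + u *: e) - s b) / u <= (s (b + w *: e) - s b) / w.
Proof.
move=> I u0 w0 Du Dw.
have wu : 0 < w - u by lra.
have wu0 : w - u != 0 by rewrite gt_eqF.
set th := w / (w - u); set th' := (- u) / (w - u).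
have th0 : 0 < th by rewrite /th divr_gt0.
have th'0 : 0 < th' by rewrite /th' divr_gt0 // oppr_gt0.
have Eb : th *: (b + u *: e) + th' *: (b + w *: e) = b.
  rewrite !scalerDr !scalerA addrACA -!scalerDl.
  have -> : th + th' = 1 by rewrite /th /th'; field.
  have -> : th * u + th' * w = 0 by rewrite /th /th'; field.
  by rewrite scale1r scale0r addr0.
have H := I_sub I (I_scale I th0 Du) (I_scale I th'0 Dw).
rewrite Eb (I_hom I th0 Du) (I_hom I th'0 Dw) in H.
set A := s (b + u *: e) in H *; set B := s (b + w *: e) in H *; set S := s b in H *.
have H2 : (w - u) * S <= w * A - u * B.
  have -> : w * A - u * B = (w - u) * (th * A + th' * B) by rewrite /th /th'; field.
  by rewrite ler_pM2l.
set qa := (A - S) / u; set qb := (B - S) / w.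
have Ea : A = S + qa * u by rewrite /qa divfK ?lt_eqF //; lra.
have Eb2 : B = S + qb * w by rewrite /qb divfK ?gt_eqF //; lra.
rewrite Ea Eb2 in H2.
have H3 : 0 <= (- u * w) * (qb - qa).
  have -> : (- u * w) * (qb - qa) = (w * (S + qa * u) - u * (S + qb * w)) - (w - u) * S by ring.
  by rewrite subr_ge0.
have uw : 0 < - u * w by rewrite mulr_gt0 // oppr_gt0.
rewrite pmulr_rge0 // in H3; lra.
Qed.

Lemma exists_valid (R : realType) (V : lmodType R) (b : V) D s e :
  Inv b D s -> exists c, valid b D s e c.
Proof.
move=> I.
have [l1 [l10 D1]] := I_int I e.
have [l2 [l20 D2]] := I_int I (- e).
have il1 : 0 < l1^-1 by rewrite invr_gt0.
have il2 : 0 < l2^-1 by rewrite invr_gt0.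
have Du1 : D (b + l1^-1 *: e).
  have := I_scale I il1 D1.
  by rewrite scalerDr scalerA mulVf ?gt_eqF // scale1r.
have Du2 : D (b + (- l2^-1) *: e).
  have := I_scale I il2 D2.
  by rewrite scalerDr scalerA mulVf ?gt_eqF // scale1r scalerN scaleNr.
pose Q u := (s (b + u *: e) - s b) / u.
pose Rs := [set y | exists u, 0 < u /\ D (b + u *: e) /\ y = Q u].
have lbR : has_lbound Rs.
  exists (Q (- l2^-1)) => _ [w [w0 [Dw ->]]].
  by apply: (key1d I) => //; lra.
have neR : nonempty Rs by exists (Q l1^-1); exists l1^-1.
exists (inf Rs), (s b) => u Du.
case: (ltgtP u 0) => [u0|u0|->].
- have : Q u <= inf Rs.
    apply: lb_le_inf => // _ [w [w0 [Dw ->]]]; exact: (key1d I).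
  rewrite /Q ler_ndivrMr //.
  nra.
- have : inf Rs <= Q u by apply: (ge_inf lbR); exists u.
  rewrite /Q ler_pdivlMr //.
  nra.
- by rewrite scale0r addr0 mul0r subr0.
Qed.

Lemma descend_list (R : realType) (V : lmodType R) (b : V) (es : seq V) D s :
  Inv b D s ->
  exists D' s' (cf : V -> R), Inv b D' s' /\ (forall x, D x -> D' x /\ s' x <= s x) /\
    (forall e, e \in es -> LinAlong D' s' e (cf e)) /\
    (forall f c, LinAlong D s f c -> LinAlong D' s' f c).
Proof.
elim: es D s => [|e es IH] D s I.
  by exists D, s, (fun _ => 0); split => //; split => //; move=> x Dx; split.
have [c v] := exists_valid e I.
have I1 := Sst_Inv I v.
have [D' [s' [cf [I' [Hle [Hlin Hpres]]]]]] := IH _ _ I1.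
exists D', s', (fun f => if f == e then c else cf f); split => //; split.
  move=> x Dx; have [D'x le'] := Hle _ (Dst_of e Dx).
  by split => //; apply: le_trans le' (Sst_le I v Dx).
split.
  move=> f; rewrite inE; case: eqP => [-> _|_ /= fin]; last exact: Hlin.
  exact: Hpres (Sst_lin I v).
by move=> f cf0 L; apply: Hpres; exact: (Sst_pres I v L).
Qed.

Lemma descend0 (R : realType) (V : lmodType R) (b : V) (es : seq V) D s (P : V -> Prop) r :
  Inv b D s -> P b -> (forall e, e \in es -> forall x t, P x -> P (x + t *: e)) ->
  (forall x, D x -> P x -> r <= s x) ->
  exists D' s', Inv b D' s' /\ (forall x, D x -> D' x /\ s' x <= s x) /\
    (forall e, e \in es -> LinAlong D' s' e 0) /\
    (forall x, D' x -> P x -> r <= s' x) /\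
    (forall f c, LinAlong D s f c -> LinAlong D' s' f c) /\
    (forall Q : V -> Prop, (forall e, e \in es -> forall x t, Q (x + t *: e) -> Q x) ->
       (forall x, D x -> Q x) -> forall x, D' x -> Q x).
Proof.
elim: es D s => [|e es IH] D s I Pb HP Hfib.
  exists D, s; split; first done.
  split; first by move=> x Dx; split.
  split; first by move=> e; rewrite in_nil.
  split; first done.
  split; first done.
  by move=> Q _.
have v : valid b D s e 0.
  exists r => u Du; rewrite mulr0 subr0; apply: Hfib => //.
  by apply: HP => //; rewrite inE eqxx.
have I1 := Sst_Inv I v.
have HP' : forall e', e' \in es -> forall x t, P x -> P (x + t *: e').
  by move=> e' ee'; apply: HP; rewrite inE ee' orbT.
have Hfib1 := Sst_fib (HP _ (mem_head _ _)) Hfib.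
have [D' [s' [I' [Hle [Hlin [Hfib' [Hpres HQ]]]]]]] := IH _ _ I1 Pb HP' Hfib1.
exists D', s'; split => //; split.
  move=> x Dx; have [D'x le'] := Hle _ (Dst_of e Dx).
  by split => //; apply: le_trans le' (Sst_le I v Dx).
split.
  move=> f; rewrite inE; case: eqP => [-> _|_ /= fin]; last exact: Hlin.
  exact: Hpres (Sst_lin I v).
split => //; split.
  by move=> f cf0 L; apply: Hpres; exact: (Sst_pres I v L).
move=> Q HQe HD; apply: HQ.
  by move=> e' ee'; apply: HQe; rewrite inE ee' orbT.
by apply: Sst_Q; [apply: HQe; exact: mem_head | exact: HD].
Qed.

Lemma le_sum1 (R : realType) n (F : 'I_n -> R) i :
  (forall k, 0 <= F k) -> F i <= \sum_k F k.
Proof. by move=> F0; rewrite (bigD1 i) //= lerDl sumr_ge0. Qed.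

Lemma le_sum2 (R : realType) n m (F : 'I_n -> 'I_m -> R) i j :
  (forall k l, 0 <= F k l) -> F i j <= \sum_k \sum_l F k l.
Proof.
move=> F0; apply: le_trans (le_sum1 _ _) (le_sum1 i _) => //.
by move=> k; apply: sumr_ge0 => l _.
Qed.

Definition bmx (R : realType) n m (p : 'I_n -> R) (q : 'I_m -> R) : 'M[R]_(n, m) :=
  \matrix_(i, j) (p i * q j).

Lemma posmx_Inv (R : realType) (n m : nat) (Phi : 'M[R]_(n, m) -> R)
  (hconv : convex_on_pos Phi) (hhom : pos_homogeneous Phi)
  (p : 'I_n -> R) (q : 'I_m -> R) (hp : simplex_pos p) (hq : simplex_pos q) :
  Inv (bmx p q) (@posmx R n m) Phi.
Proof.
have bpos : forall i j, 0 < p i * q j by move=> i j; rewrite mulr_gt0 //; [apply: hp.1|apply: hq.1].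
split.
- by move=> i j; rewrite mxE.
- by move=> x y Dx Dy i j; rewrite mxE addr_gt0.
- by move=> x l l0 Dx i j; rewrite mxE mulr_gt0.
- move=> x y Dx Dy.
  have h2 : 0 < (2 : R)^-1 by rewrite invr_gt0.
  have H := hconv x y (2^-1) Dx Dy (ltW h2).
  have h21 : (2 : R)^-1 <= 1 by rewrite invf_le1 // ler1n.
  move: H => /(_ h21) H.
  set X := 2^-1 *: x + (1 - 2^-1) *: y in H.
  have DX : posmx X.
    move=> i j; rewrite !mxE; apply: addr_gt0; apply: mulr_gt0 => //.
    by rewrite subr_gt0 invf_lt1 // ltr1n.
  have -> : x + y = 2 *: X.
    rewrite /X scalerDr !scalerA mulfV ?pnatr_eq0 // scale1r.
    by rewrite mulrBr mulr1 mulfV ?pnatr_eq0 // (_ : (2 : R) - 1 = 1) ?scale1r //; lra.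
  rewrite hhom //.
  have E : (1 - (2 : R)^-1) = 2^-1 by lra.
  rewrite E in H.
  lra.
- by move=> x l l0 Dx; apply: hhom.
- move=> x.
  pose l := 1 + \sum_i \sum_j `|x i j| / (p i * q j).
  have F0 : forall k l, 0 <= `|x k l| / (p k * q l).
    by move=> k l0; rewrite divr_ge0 // ltW.
  have l0 : 0 < l.
    rewrite /l ltr_pwDl //; apply: sumr_ge0 => k _; apply: sumr_ge0 => l1 _; exact: F0.
  exists l; split => // i j; rewrite !mxE.
  have H := le_sum2 i j F0.
  have H2 : (1 + `|x i j| / (p i * q j)) * (p i * q j) <= l * (p i * q j).
    by rewrite ler_pM2r // /l lerD2l.
  rewrite mulrDl mul1r divfK ?gt_eqF // in H2.
  have := bpos i j; have := ler_norm (- x i j); rewrite normrN.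
  lra.
Qed.

Lemma sum_ind (R : realType) n (F : 'I_n -> R) i : \sum_k (k == i)%:R * F k = F i.
Proof.
rewrite (bigD1 i) //= eqxx mul1r big1 ?addr0 // => k /negbTE ->.
by rewrite mul0r.
Qed.

Lemma sum_ind_diff (R : realType) n (F : 'I_n -> R) i i0 :
  \sum_k ((k == i)%:R - (k == i0)%:R) * F k = F i - F i0.
Proof.
by rewrite (eq_bigr (fun k => (k == i)%:R * F k - (k == i0)%:R * F k)) ?sumrB ?sum_ind // => k _; rewrite mulrBl.
Qed.

Definition Dm (R : realType) n m (i0 i : 'I_n) (j0 j : 'I_m) : 'M[R]_(n, m) :=
  \matrix_(k, l) (((k == i)%:R - (k == i0)%:R) * ((l == j)%:R - (l == j0)%:R)).

Lemma Dm_row (R : realType) n m (i0 i : 'I_n) (j0 j : 'I_m) k :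
  \sum_l (Dm R i0 i j0 j) k l = 0.
Proof.
rewrite (eq_bigr (fun l => ((k == i)%:R - (k == i0)%:R) * (((l == j)%:R - (l == j0)%:R) * 1))).
  by rewrite -mulr_sumr sum_ind_diff subrr mulr0.
by move=> l _; rewrite mxE mulr1.
Qed.

Lemma Dm_col (R : realType) n m (i0 i : 'I_n) (j0 j : 'I_m) l :
  \sum_k (Dm R i0 i j0 j) k l = 0.
Proof.
rewrite (eq_bigr (fun k => ((k == i)%:R - (k == i0)%:R) * (((l == j)%:R - (l == j0)%:R)))).
  by rewrite -mulr_suml (eq_bigr (fun k => ((k == i)%:R - (k == i0)%:R) * 1)) ?sum_ind_diff ?subrr ?mul0r // => k _; rewrite mulr1.
by move=> k _; rewrite mxE.
Qed.

Lemma lin_Dm (R : realType) n m (i0 i : 'I_n) (j0 j : 'I_m) (c : 'I_n -> 'I_m -> R) :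
  \sum_k \sum_l (Dm R i0 i j0 j) k l * c k l = (c i j - c i j0) - (c i0 j - c i0 j0).
Proof.
rewrite (eq_bigr (fun k => ((k == i)%:R - (k == i0)%:R) * (c k j - c k j0))).
  by rewrite sum_ind_diff.
move=> k _; rewrite -sum_ind_diff mulr_sumr; apply: eq_bigr => l _.
by rewrite mxE mulrA.
Qed.

Lemma dual_exists (R : realType) (n m : nat) (Phi : 'M[R]_(n, m) -> R)
  (hconv : convex_on_pos Phi) (hhom : pos_homogeneous Phi)
  (p : 'I_n -> R) (q : 'I_m -> R) (hp : simplex_pos p) (hq : simplex_pos q)
  (i0 : 'I_n) (j0 : 'I_m) (r : R) :
  (forall P, couplings p q P -> r <= Phi P) ->
  exists (a : 'I_n -> R) (bb : 'I_m -> R),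
    (forall A, posmx A -> frob A (oplus_mx a bb) <= Phi A) /\
    \sum_i p i * a i + \sum_j q j * bb j = r.
Proof.
move=> Hr.
set b := bmx p q.
have I0 := posmx_Inv hconv hhom hp hq.
set es0 := [seq Dm R i0 ij.1 j0 ij.2 | ij : 'I_n * 'I_m].
pose P (x : 'M[R]_(n, m)) := (forall i, \sum_j x i j = p i) /\ (forall j, \sum_i x i j = q j).
have Pb : P b.
  split => [i|j]; rewrite /b /bmx.
  - by under eq_bigr do rewrite mxE; rewrite -mulr_sumr hq.2 mulr1.
  - by under eq_bigr do rewrite mxE; rewrite -mulr_suml hp.2 mul1r.
have HP : forall e, e \in es0 -> forall x t, P x -> P (x + t *: e).
  move=> e /mapP [[i j] _ ->] x t [P1 P2]; split.
  - move=> k; rewrite (eq_bigr (fun l => x k l + t * (Dm R i0 i j0 j) k l)); last by move=> l _; rewrite !mxE.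
    by rewrite big_split /= -mulr_sumr Dm_row mulr0 addr0 P1.
  - move=> l; rewrite (eq_bigr (fun k => x k l + t * (Dm R i0 i j0 j) k l)); last by move=> k _; rewrite !mxE.
    by rewrite big_split /= -mulr_sumr Dm_col mulr0 addr0 P2.
have Hfib0 : forall x, posmx x -> P x -> r <= Phi x.
  by move=> x Dx [P1 P2]; apply: Hr.
have [D1 [s1 [I1 [Hle1 [Hlin1 [Hfib1 [Hpres1 HQ1]]]]]]] := descend0 I0 Pb HP Hfib0.
have Qinv : forall x, D1 x -> 0 < \sum_j x i0 j.
  apply: HQ1.
    move=> e /mapP [[i j] _ ->] x t.
    rewrite (eq_bigr (fun l => x i0 l + t * (Dm R i0 i j0 j) i0 l)); last by move=> l _; rewrite !mxE.
    by rewrite big_split /= -mulr_sumr Dm_row mulr0 addr0.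
  move=> x Dx; apply: lt_le_trans (Dx i0 j0) _.
  by apply: (le_sum1 (F := fun j => x i0 j)) => k; apply: ltW.
have vb : valid b D1 s1 b r.
  exists r => u Du.
  have E : b + u *: b = (1 + u) *: b by rewrite scalerDl scale1r.
  rewrite E in Du *.
  have Qb := Qinv _ Du.
  rewrite (eq_bigr (fun j => (1 + u) * b i0 j)) in Qb; last by move=> j _; rewrite mxE.
  rewrite -mulr_sumr Pb.1 pmulr_lgt0 in Qb; last exact: hp.1.
  rewrite (I_hom I1 Qb (I_b I1)).
  have := Hfib1 _ (I_b I1) Pb.
  nra.
have I2 := Sst_Inv I1 vb.
have Lin2b := Sst_lin I1 vb.
have Lin2D : forall e, e \in es0 -> LinAlong (Dst D1 b) (Sst D1 s1 b r) e 0.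
  by move=> e he; exact: (Sst_pres I1 vb (Hlin1 e he)).
have [D3 [s3 [cf [I3 [Hle3 [Hlin3 Hpres3]]]]]] :=
  descend_list [seq delta_mx ij.1 ij.2 | ij : 'I_n * 'I_m] I2.
pose c i j := cf (delta_mx i j).
have Hle : forall A, posmx A -> D3 A /\ s3 A <= Phi A.
  move=> A DA; have [DA1 le1] := Hle1 _ DA.
  have DA2 := Dst_of b DA1; have le2 := Sst_le I1 vb DA1.
  have [DA3 le3] := Hle3 _ DA2.
  split => //; apply: le_trans le3 _; apply: le_trans le2 _; exact: le1.
pose K (z : 'M[R]_(n, m)) (a : R) := forall x, D3 x -> D3 (x + z) /\ s3 (x + z) = s3 x + a.
have Kadd : forall z1 a1 z2 a2, K z1 a1 -> K z2 a2 -> K (z1 + z2) (a1 + a2).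
  move=> z1 a1 z2 a2 K1 K2 x Dx; have [D1x E1] := K1 _ Dx; have [D2x E2] := K2 _ D1x.
  by rewrite addrA; split => //; rewrite E2 E1 addrA.
have K0 : K 0 0 by move=> x Dx; rewrite !addr0.
have Kall : forall y, K y (\sum_i \sum_j y i j * c i j).
  move=> y; rewrite {1}(matrix_sum_delta y).
  apply: (big_ind2 K K0 Kadd) => i _.
  apply: (big_ind2 K K0 Kadd) => j _.
  move=> x Dx.
  have mem : (delta_mx i j : 'M[R]_(n, m)) \in [seq (delta_mx ij.1 ij.2 : 'M[R]_(n, m)) | ij : 'I_n * 'I_m].
    by apply/fintype.imageP; exists (i, j).
  exact: (Hlin3 _ mem x (y i j) Dx).
have [D0 s0E] := Kall (- b) _ (I_b I3).
rewrite addrN in D0 s0E.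
have s00 : s3 0 = 0.
  have := I_hom I3 (_ : 0 < 2) D0; rewrite scaler0 => H.
  have : s3 0 = 2 * s3 0 by apply: H.
  lra.
have s3E : forall y, s3 y = \sum_i \sum_j y i j * c i j.
  by move=> y; have [_ ] := Kall y _ D0; rewrite add0r s00 add0r.
have crel : forall i j, c i j = c i j0 + (c i0 j - c i0 j0).
  move=> i j.
  have mem : Dm R i0 i j0 j \in es0 by apply/fintype.imageP; exists (i, j).
  have [_ H] := Hpres3 _ _ (Lin2D _ mem) 0 1 D0.
  rewrite add0r scale1r mulr0 addr0 s00 s3E lin_Dm in H.
  lra.
exists (fun i => c i j0), (fun j => c i0 j - c i0 j0); split.
  move=> A DA; have [_ le] := Hle A DA.
  suff -> : frob A (oplus_mx (fun i => c i j0) (fun j => c i0 j - c i0 j0)) = s3 A by [].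
  rewrite s3E /frob.
  apply: eq_bigr => i _; apply: eq_bigr => j _; by rewrite /oplus_mx mxE (crel i j).
have [_ H] := Hpres3 _ _ Lin2b 0 1 D0.
rewrite add0r scale1r mul1r s00 add0r s3E in H.
have E : \sum_i \sum_j b i j * c i j = \sum_i p i * c i j0 + \sum_j q j * (c i0 j - c i0 j0).
  rewrite (eq_bigr (fun i => \sum_j p i * q j * c i j0 + \sum_j q j * p i * (c i0 j - c i0 j0))); last first.
    move=> i _; rewrite -big_split /=; apply: eq_bigr => j _.
    rewrite /b /bmx mxE (crel i j); ring.
  rewrite big_split /=; congr (_ + _).
    apply: eq_bigr => i _; rewrite (eq_bigr (fun j => p i * c i j0 * q j)); last by move=> j _; ring.
    by rewrite -mulr_sumr hq.2 mulr1.
  rewrite exchange_big /=; apply: eq_bigr => j _.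
  rewrite (eq_bigr (fun i => q j * (c i0 j - c i0 j0) * p i)); last by move=> i _; ring.
  by rewrite -mulr_sumr hp.2 mulr1.
by rewrite -H E.
Qed.

Lemma frobZ (R : realType) n m (d : R) (A u : 'M[R]_(n, m)) : frob (d *: A) u = d * frob A u.
Proof.
rewrite /frob mulr_sumr; apply: eq_bigr => i _; rewrite mulr_sumr; apply: eq_bigr => j _.
by rewrite mxE mulrA.
Qed.

Lemma legendre_zero (R : realType) n m (Phi : 'M[R]_(n, m) -> R) (hhom : pos_homogeneous Phi)
  (u b : 'M[R]_(n, m)) :
  (forall A, posmx A -> frob A u <= Phi A) -> posmx b -> legendre Phi u = 0%E.
Proof.
move=> H Db; apply/eqP; rewrite eq_le; apply/andP; split.
  by apply: ge_ereal_sup => _ [A DA <-]; rewrite lee_fin subr_le0; apply: H.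
apply/lee_subgt0Pr => e e0.
set a := frob b u - Phi b.
have a0 : a <= 0 by rewrite /a subr_le0; apply: H.
have a1 : 0 < 1 - a by lra.
set d := e / (1 - a).
have d0 : 0 < d by rewrite /d divr_gt0.
apply: le_ereal_sup_tmp; exists ((frob (d *: b) u - Phi (d *: b))%:E).
  by exists (d *: b) => // i j; rewrite mxE mulr_gt0.
rewrite frobZ hhom // -mulrBr -/a sub0e lee_fin.
have -> : d * a = e / (1 - a) - e by rewrite /d; field; rewrite gt_eqF.
have : 0 < e / (1 - a) by rewrite divr_gt0.
lra.
Qed.

Lemma frob_coupling (R : realType) n m (p : 'I_n -> R) (q : 'I_m -> R) (P : 'M[R]_(n, m)) a bb :
  couplings p q P -> frob P (oplus_mx a bb) = \sum_i p i * a i + \sum_j q j * bb j.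
Proof.
move=> [_ [P1 P2]].
rewrite /frob (eq_bigr (fun i => \sum_j P i j * a i + \sum_j P i j * bb j)); last first.
  by move=> i _; rewrite -big_split /=; apply: eq_bigr => j _; rewrite /oplus_mx mxE mulrDr.
rewrite big_split /=; congr (_ + _).
  by apply: eq_bigr => i _; rewrite -mulr_suml P1.
rewrite exchange_big /=; apply: eq_bigr => j _; by rewrite -mulr_suml P2.
Qed.

Unset Implicit Arguments.

Theorem lemmaA2 (R : realType) (n m : nat) (Phi : 'M[R]_(n, m) -> R)
  (hconv : convex_on_pos Phi) (hhom : pos_homogeneous Phi)
  (p : 'I_n -> R) (q : 'I_m -> R)
  (hp : simplex_pos p) (hq : simplex_pos q) :
  ereal_inf [set (Phi P)%:E | P in couplings p q] =
  ereal_sup [set ((\sum_(i < n) p i * ab.1 i + \sum_(j < m) q j * ab.2 j)%:E)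
            | ab in [set ab : ('I_n -> R) * ('I_m -> R) |
                     legendre Phi (oplus_mx ab.1 ab.2) = 0%E]].
Proof.
have n0 : (0 < n)%N.
  case: (n) p hp => [|k] // p' [_ h]; move: h; rewrite big_ord0 => /eqP.
  by rewrite eq_sym oner_eq0.
have m0 : (0 < m)%N.
  case: (m) q hq => [|k] // q' [_ h]; move: h; rewrite big_ord0 => /eqP.
  by rewrite eq_sym oner_eq0.
pose i0 := Ordinal n0; pose j0 := Ordinal m0.
have bP : couplings p q (bmx p q).
  have [I _ _ _ _ _] := posmx_Inv hconv hhom hp hq.
  split => //; split => [i|j]; rewrite /bmx.
  - by under eq_bigr do rewrite mxE; rewrite -mulr_sumr hq.2 mulr1.
  - by under eq_bigr do rewrite mxE; rewrite -mulr_suml hp.2 mul1r.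
apply/eqP; rewrite eq_le; apply/andP; split.
  have Hb : (ereal_inf [set (Phi P)%:E | P in couplings p q] <= (Phi (bmx p q))%:E)%E.
    by apply: ereal_inf_lbound; exists (bmx p q).
  move: Hb; case E : (ereal_inf _) => [r| |] // _; last by rewrite leNye.
  have Hr : forall P, couplings p q P -> r <= Phi P.
    move=> P HP; rewrite -lee_fin -E; apply: ereal_inf_lbound; by exists P.
  have [a [bb [H1 H2]]] := dual_exists hconv hhom hp hq i0 j0 Hr.
  apply: ereal_sup_ubound; exists (a, bb) => /=; last by rewrite H2.
  exact: (legendre_zero hhom H1 bP.1).
apply: ge_ereal_sup => _ [[a bb] /= Hl <-].
apply: le_ereal_inf_tmp => _ [P HP <-].
rewrite lee_fin -(frob_coupling a bb HP).
have : ((frob P (oplus_mx a bb) - Phi P)%:E <= legendre Phi (oplus_mx a bb))%E.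
  by apply: ereal_sup_ubound; exists P => //; exact: HP.1.
by rewrite Hl lee_fin subr_le0.
Qed.
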